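(* Let $k$ be such that $n = k\,2^{(k+9)/2}$ is an integer divisible by $k$. Then, for $k$ sufficiently large, $$T(\mathcal{F}_2^4) < k^3 f(n,k),$$ where $f(n,k) = \binom{k}{3}\left(\frac{n}{k}\right)^{4k-9}2^{-4\binom{k}{2}+9}$.
   Context: Partition the vertex set of $K_n$ into $k$ classes $V_1,\dots,V_k$, each of size $n/k$. Let $X=\{\{v_i,v_j\}: v_i\in V_i,\ v_j\in V_j,\ i\ne j\}$. Let $\mathcal{F}=\{\binom{S}{2}: S\subseteq V_1\cup\dots\cup V_k,\ |S\cap V_i|=1 \text{ for all } i\}$ be the family of edge sets of transversal $k$-cliques. For a family $\mathcal{H}$ of finite sets, $T(\mathcal{H}) = \sum_{H\in\mathcal{H}}2^{-|H|}$. The family of $4$-clusters is $$\mathcal{F}_2^4=\left\{E_1\cup E_2\cup E_3\cup E_4 : \{E_1,\dots,E_4\}\in\binom{\mathcal{F}}{4},\ |E_1\cap E_2\cap E_3\cap E_4|\ge 2\right\},$$ i.e. the set of all unions of $4$ distinct members of $\mathcal{F}$ that share at least two elements of $X$. *)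

(* Defs.v *)
From HB Require Import structures.
From mathcomp Require Import all_boot all_order all_algebra.
Set Implicit Arguments. Unset Strict Implicit. Unset Printing Implicit Defensive.
Import Order.TTheory GRing.Theory Num.Theory.

(* Vertex set of K_n partitioned into k classes V_1..V_k of size m = n/k:
   vertex (i, v) lies in class V_i. *)
Definition vtx (k m : nat) := ('I_k * 'I_m)%type.

Definition vclass (k m : nat) (i : 'I_k) : {set vtx k m} :=
  [set x : vtx k m | x.1 == i].

Definition crossEdges (k m : nat) : {set {set vtx k m}} :=
  [set e : {set vtx k m} | [exists x : vtx k m, exists y : vtx k m,
      (x.1 != y.1) && (e == [set x; y])]].

Definition transversal (k m : nat) (S : {set vtx k m}) : bool :=
  [forall i : 'I_k, #|S :&: vclass m i| == 1].

Definition binom2 (k m : nat) (S : {set vtx k m}) : {set {set vtx k m}} :=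
  [set e : {set vtx k m} | (e \subset S) && (#|e| == 2)].

Definition cliqueFam (k m : nat) : {set {set {set vtx k m}}} :=
  [set binom2 S | S in [set S : {set vtx k m} | transversal S]].

(* F_2^4: unions of 4 distinct members of F sharing at least 2 elements of X *)
Definition cluster4 (k m : nat) : {set {set {set vtx k m}}} :=
  [set (\bigcup_(E in Q) E) | Q : {set {set {set vtx k m}}} in
     [set Q : {set {set {set vtx k m}}} |
        [&& Q \subset cliqueFam k m, #|Q| == 4 &
            2 <= #|(\bigcap_(E in Q) E) :&: crossEdges k m|]]].

Definition Tweight (T : finType) (H : {set {set T}}) : rat :=
  (\sum_(A in H) (2%:Q) ^- #|A|)%R.

Definition fnk (n k : nat) : rat :=
  ('C(k, 3)%:R * ((n%:R / k%:R) ^ ((4 * k)%:Z - 9)%R)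
    * (2%:Q) ^ (- (4 * 'C(k, 2))%:Z + 9)%R)%R.

(* Main.v *)
Require Import Defs.
From HB Require Import structures.
From mathcomp Require Import all_boot all_order all_algebra.
Import Order.TTheory GRing.Theory Num.Theory.
From mathcomp Require Import zify.
Module Aux.
Set Implicit Arguments. Unset Strict Implicit. Unset Printing Implicit Defensive.

Lemma expmono a b e : a <= b -> a ^ e <= b ^ e.
Proof. by move=> h; elim: e => // e IH; rewrite !expnS leq_mul. Qed.

Lemma bin_le_pow n j : 'C(n, j) <= n ^ j.
Proof.
elim: n j => [|n IH] [|j] //.
rewrite binS; apply: (@leq_trans (n ^ j.+1 + n ^ j)); first exact: leq_add.
rewrite expnS [X in _ <= X]expnS.
have := expmono j (leqnSn n); nia.
Qed.

Lemma bin_le_2pow n j : 'C(n, j) <= 2 ^ n.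
Proof.
elim: n j => [|n IH] [|j] //; first by rewrite expn_gt0.
by rewrite binS expnS mul2n -addnn leq_add.
Qed.

Lemma bin2_dbl j : 'C(j, 2) * 2 = j * j.-1.
Proof.
elim: j => // j IH; rewrite binS bin1 mulnDl IH; case: j {IH} => //= j; lia.
Qed.

Lemma bin2S3 j : 'C(3 + j, 2) = 3 + 3 * j + 'C(j, 2).
Proof.
have h1 := bin2_dbl (3 + j); have h2 := bin2_dbl j.
have e : (3 + j).-1 = 2 + j by [].
rewrite e in h1; case: j h1 h2 e => [|j] /= h1 h2 _; lia.
Qed.

Lemma pow4_bound p : 20 <= p -> 144 * p ^ 4 <= 2 ^ (p + 7).
Proof.
move=> hp; rewrite -(subnKC hp); elim: (p - 20) => [|d IH]; first lia.
have h : (20 + d.+1) ^ 4 <= 2 * (20 + d) ^ 4 by nia.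
have e : 20 + d.+1 + 7 = (20 + d + 7).+1 by lia.
rewrite e (expnS 2); move: h IH; generalize ((20 + d.+1) ^ 4) ((20 + d) ^ 4) (2 ^ (20 + d + 7)); lia.
Qed.

Lemma lin_pow p : p.*2 <= 2 ^ p.
Proof.
elim: p => // p IH; rewrite doubleS expnS.
have : 0 < 2 ^ p by rewrite expn_gt0. case: p IH => [|p] IH /=; first by [].
have : 2 <= 2 ^ p.+1 by rewrite (leq_pexp2l (m:=2) (n1:=1)).
lia.
Qed.

Lemma term_bound p j : 20 <= p -> 1 <= j <= p.*2 ->
  p.*2 * 'C(p.*2, j) * 3 ^ j * 2 ^ 'C(j, 2) <= 2 ^ (j * (p + 3)).
Proof.
move=> hp /andP[j1 j2].
have hd := bin2_dbl j.
case: (leqP j p) => hjp.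
- set N := p.*2.
  have hN : N <= N ^ j by rewrite -{1}(expn1 N) leq_pexp2l //; rewrite /N; lia.
  have h1 : N * 'C(N, j) * 3 ^ j <= (3 * N * N) ^ j.
    apply: (@leq_trans ((N ^ j * N ^ j) * 3 ^ j)).
      by rewrite leq_mul2r leq_mul ?orbT // bin_le_pow.
    rewrite !expnMn; move: (N ^ j) (3 ^ j) => a b; lia.
  rewrite -(leq_exp2r _ _ (isT : 0 < 2)).
  apply: (@leq_trans (((3 * N * N) ^ 2 * 2 ^ (p - 1)) ^ j)).
    have E1 : (N * 'C(N, j) * 3 ^ j * 2 ^ 'C(j, 2)) ^ 2
      = (N * 'C(N, j) * 3 ^ j) ^ 2 * 2 ^ ('C(j, 2) * 2) by rewrite expnMn -expnM.
    have E2 : ((3 * N * N) ^ 2 * 2 ^ (p - 1)) ^ j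
      = ((3 * N * N) ^ j) ^ 2 * 2 ^ ((p - 1) * j)
      by rewrite expnMn -!expnM (mulnC 2 j) expnM.
    rewrite E1 E2; apply: leq_mul; first exact: expmono.
    rewrite leq_exp2l // hd; case: j j1 j2 hjp hd {h1 hN E1 E2} => // j _ _ /= hjp hd; nia.
  have E3 : (2 ^ (j * (p + 3))) ^ 2 = (2 ^ ((p + 7) + (p - 1))) ^ j.
    by rewrite -!expnM; congr (2 ^ _); lia.
  rewrite E3; apply: expmono; rewrite expnD leq_mul2r; apply/orP; right.
  have -> : (3 * N * N) ^ 2 = 144 * p ^ 4 by rewrite /N -!mul2n; lia.
  exact: pow4_bound.
- have hN : p.*2 <= 2 ^ p := lin_pow p.
  have hC : 'C(p.*2, j) <= 2 ^ (p.*2) := bin_le_2pow _ _.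
  have h3 : 3 ^ j <= 2 ^ (4 * p).
    apply: (@leq_trans (3 ^ (p.*2))); first exact: leq_pexp2l.
    by rewrite -mul2n !expnM; apply: expmono.
  apply: (@leq_trans (2 ^ (7 * p) * 2 ^ 'C(j, 2))).
    apply: leq_mul => //.
    have -> : 7 * p = p + p.*2 + 4 * p by rewrite -mul2n; lia.
    by rewrite (expnD 2 (p + p.*2)) (expnD 2 p); apply: leq_mul (leq_mul hN hC) h3.
  rewrite -expnD leq_exp2l //.
  have : (p.*2 - j) * (j - 7) >= 0 by [].
  clear hN hC h3; case: j j1 j2 hjp hd => // j _ j2 hjp hd; nia.
Qed.

Lemma sum_bound p : 20 <= p ->
  \sum_(j < (p.*2).+1) 'C(p.*2, j) * (2 ^ 'C(3 + j, 2) * (3 ^ j * (2 ^ (p + 6)) ^ (p.*2 - j)))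
    <= 16 * (2 ^ (p + 6)) ^ (p.*2).
Proof.
move=> hp; set N := p.*2; set m := 2 ^ (p + 6).
have key : forall j, 1 <= j <= N ->
    N * ('C(N, j) * (2 ^ 'C(3 + j, 2) * (3 ^ j * m ^ (N - j)))) <= 8 * m ^ N.
  move=> j hj; have hjN : j <= N by case/andP: hj.
  have eL : N * ('C(N, j) * (2 ^ 'C(3 + j, 2) * (3 ^ j * m ^ (N - j))))
      = (8 * 2 ^ (3 * j) * m ^ (N - j)) * (N * 'C(N, j) * 3 ^ j * 2 ^ 'C(j, 2)).
    rewrite bin2S3 !expnD.
    move: (2 ^ (3 * j)) (2 ^ 'C(j, 2)) (m ^ (N - j)) ('C(N, j)) (3 ^ j) => a b c d e.
    rewrite [2 ^ 3]/=; lia.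
  have eR : 8 * m ^ N = (8 * 2 ^ (3 * j) * m ^ (N - j)) * 2 ^ (j * (p + 3)).
    have -> : m ^ N = m ^ j * m ^ (N - j) by rewrite -expnD subnKC.
    have -> : m ^ j = 2 ^ (3 * j) * 2 ^ (j * (p + 3)).
      by rewrite /m -expnM -expnD; congr (2 ^ _); lia.
    move: (2 ^ (3 * j)) (2 ^ (j * (p + 3))) (m ^ (N - j)) => a b c; lia.
  by rewrite eL eR leq_mul2l term_bound ?orbT.
rewrite big_ord_recl /=.
have -> : 'C(N, 0) * (2 ^ 'C(3 + 0, 2) * (3 ^ 0 * m ^ (N - 0))) = 8 * m ^ N.
  have -> : 'C(3 + 0, 2) = 3 by [].
  rewrite bin0 subn0 expn0; move: (m ^ N) => x; rewrite [2 ^ 3]/=; lia.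
have hN : 0 < N by rewrite /N; lia.
have : N * (\sum_(i < N) 'C(N, bump 0 i) * (2 ^ 'C(3 + bump 0 i, 2) *
          (3 ^ bump 0 i * m ^ (N - bump 0 i)))) <= N * (8 * m ^ N).
  rewrite big_distrr /=.
  apply: (@leq_trans (\sum_(i < N) 8 * m ^ N)).
    apply: leq_sum => i _; apply: key; rewrite /bump /=; have := ltn_ord i; lia.
  by rewrite sum_nat_const card_ord.
rewrite leq_pmul2l // => h; by rewrite -[16]/(8 + 8) mulnDl leq_add2l.
Qed.

Lemma sum_subsets (T : finType) (W : {set T}) (h : nat -> nat) :
  \sum_(J : {set T} | J \subset W) h #|J| = \sum_(j < #|W|.+1) 'C(#|W|, j) * h j.
Proof.
rewrite (partition_big (fun J : {set T} => inord #|J| : 'I_#|W|.+1) xpredT) //=.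
apply: eq_bigr => j _.
rewrite (eq_bigr (fun _ => h j)); last first.
  by move=> J /andP [JW /eqP <-]; rewrite inordK // ltnS subset_leq_card.
rewrite sum_nat_cond_const; congr (_ * _).
rewrite -cards_draws; apply: eq_card => J; rewrite !inE.
apply/andP/andP => [[JW /eqP <-]|[JW /eqP jE]]; split => //.
  by rewrite inordK // ltnS subset_leq_card.
by apply/eqP/val_inj; rewrite /= inordK jE // ltn_ord.
Qed.

Section Comb.
Variables k m : nat.
Local Notation V := (vtx k m).
Local Notation FF := {ffun 'I_k -> 'I_m}.

Definition graph (f : FF) : {set V} := [set x : V | x.2 == f x.1].

Lemma in_graph f i v : ((i, v) \in graph f) = (v == f i).
Proof. by rewrite inE. Qed.

Lemma transversal_graph (S : {set V}) : Defs.transversal S -> exists f : FF, S = graph f.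
Proof.
move=> /forallP tS.
have H : forall i : 'I_k, exists v : 'I_m, (i, v) \in S.
  move=> i; have /cards1P [x Hx] := tS i.
  have : x \in S :&: vclass m i by rewrite Hx set11.
  rewrite !inE => /andP [xS /eqP xi]; exists x.2; by rewrite -xi -surjective_pairing.
have [g Hg] := fin_all_exists H; exists [ffun i => g i].
apply/setP => [[i v]]; rewrite inE ffunE /=; apply/idP/eqP => [Hiv | ->]; last exact: Hg.
have /cards1P [x Hx] := tS i.
have h1 : (i, v) \in S :&: vclass m i by rewrite !inE Hiv eqxx.
have h2 : (i, g i) \in S :&: vclass m i by rewrite !inE Hg eqxx.
move: h1 h2; rewrite Hx !inE => /eqP h1 /eqP h2.
by have := congr1 snd (etrans h1 (esym h2)).
Qed.

Lemma graphE f : graph f = [set (i, f i) | i : 'I_k].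
Proof.
apply/setP => [[i v]]; rewrite inE /=; apply/eqP/imsetP => [-> | [j _ [-> ->]]] //.
by exists i.
Qed.

Lemma card_graph f : #|graph f| = k.
Proof. by rewrite graphE card_imset ?card_ord // => i j [] . Qed.

Lemma card_binom2 (S : {set V}) : #|binom2 S| = 'C(#|S|, 2).
Proof. by rewrite /binom2 cards_draws. Qed.

Lemma binom2S (S S' : {set V}) : S \subset S' -> binom2 S \subset binom2 S'.
Proof.
move=> sS; apply/subsetP => e; rewrite !inE => /andP [eS ->].
by rewrite (subset_trans eS sS).
Qed.

Lemma binom2U (S S' : {set V}) : binom2 S :|: binom2 S' \subset binom2 (S :|: S').
Proof. by rewrite subUset !binom2S ?subsetUl ?subsetUr. Qed.

Lemma union_step (A : {set {set V}}) (S U : {set V}) : A \subset binom2 U ->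
  #|A| + 'C(#|S|, 2) <= #|A :|: binom2 S| + 'C(#|S :&: U|, 2).
Proof.
move=> AU.
set B := binom2 S; set B' := binom2 (S :&: U).
have BB' : B' \subset B by apply: binom2S; apply: subsetIl.
have hB : #|B| = #|B'| + #|B :\: B'|.
  by rewrite cardsD (setIidPr BB') subnKC // subset_leq_card.
have disj : A :&: (B :\: B') = set0.
  apply/setP => e; rewrite !inE; apply/negbTE; apply/negP.
  move=> /and3P [eA /negP nB' /andP [eS e2]].
  have := subsetP AU e eA; rewrite inE => /andP [eU _].
  by apply: nB'; rewrite subsetI eS eU e2.
have h1 : #|A :|: (B :\: B')| <= #|A :|: B|.
  by apply: subset_leq_card; apply: setUS; apply: subsetDl.
have h2 := cardsU A (B :\: B'); rewrite disj cards0 subn0 in h2.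
rewrite -!card_binom2; move: hB h1 h2; rewrite /B /B'; lia.
Qed.


Definition agr (I : {set 'I_k}) (t f : FF) := [forall i in I, f i == t i].

Lemma prod_split (I J : {set 'I_k}) (a b : nat) : J \subset ~: I ->
  \prod_(i : 'I_k) (if i \in I then 1 else if i \in J then a else b)
    = a ^ #|J| * b ^ (#|~: I| - #|J|).
Proof.
move=> JI.
rewrite (bigID (fun i => i \in I)) /= big1 ?mul1n; last by move=> i ->.
rewrite (bigID (fun i => i \in J)) /=.
rewrite (eq_bigr (fun _ => a)); last by move=> i /andP [/negbTE -> ->].
rewrite [X in _ * X](eq_bigr (fun _ => b)); last by move=> i /andP [/negbTE -> /negbTE ->].
rewrite (eq_bigl (fun i => i \in J)); last first.
  move=> i; apply/andP/idP => [[] //|iJ]; split => //.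
  by have := subsetP JI i iJ; rewrite inE.
rewrite [X in _ * X](eq_bigl (fun i => i \in ~: I :\: J)); last by move=> i; rewrite !inE andbC.
by rewrite !prod_nat_const cardsD (setIidPr JI).
Qed.

Lemma L_card (I J : {set 'I_k}) (t g1 g2 g3 : FF) (U : {set V}) :
  (forall i v, (i, v) \in U -> v \in [set g1 i; g2 i; g3 i]) ->
  J \subset ~: I ->
  #|[set f : FF | agr I t f && ([set i | (i \notin I) && ((i, f i) \in U)] == J)]|
    <= 3 ^ #|J| * m ^ (#|~: I| - #|J|).
Proof.
move=> hU JI.
pose Fam i := [set v : 'I_m | if i \in I then v == t i
                  else if i \in J then v \in [set g1 i; g2 i; g3 i] else true].
pose F := fun i => (fun v => v \in Fam i) : pred 'I_m.
apply: (@leq_trans #|family F|).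
  apply: subset_leq_card; apply/subsetP => f; rewrite inE => /andP [/forallP ag /eqP eJ].
  apply/familyP => i; rewrite /F /Fam inE.
  case: ifP => iI; first by have := ag i; rewrite iI.
  case: ifP => // iJ; rewrite -eJ inE iI /= in iJ; exact: hU iJ.
rewrite card_family foldrE big_image /=.
rewrite -(prod_split 3 m JI); apply: leq_prod => i _.
have -> : #|F i| = #|Fam i| by apply: eq_card.
case: ifP => iI.
  apply: (@leq_trans #|[set t i]|); last by rewrite cards1.
  by apply: subset_leq_card; apply/subsetP => v; rewrite !inE iI.
case: ifP => iJ.
  apply: (@leq_trans #|[set g1 i; g2 i; g3 i]|).
    by apply: subset_leq_card; apply/subsetP => v; rewrite !inE iI iJ.
  rewrite !cardsU !cards1; lia.
by apply: leq_trans (max_card _) _; rewrite card_ord.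
Qed.


Lemma L_sum (I : {set 'I_k}) (t g1 g2 g3 : FF) (U : {set V}) :
  #|I| = 3 -> (forall i v, (i, v) \in U -> v \in [set g1 i; g2 i; g3 i]) ->
  \sum_(f | agr I t f) 2 ^ 'C(#|graph f :&: U|, 2) <=
  \sum_(j < #|~: I|.+1) 'C(#|~: I|, j) * (2 ^ 'C(3 + j, 2) * (3 ^ j * m ^ (#|~: I| - j))).
Proof.
move=> hI hU; set N := #|~: I|.
pose Jf (f : FF) := [set i | (i \notin I) && ((i, f i) \in U)].
have step1 : forall f, #|graph f :&: U| <= 3 + #|Jf f|.
  move=> f; apply: (@leq_trans #|[set (i, f i) | i in I :|: Jf f]|).
    apply: subset_leq_card; apply/subsetP => [[i v]]; rewrite inE in_graph.
    move=> /andP [/eqP -> hiU]; apply: imset_f; rewrite !inE hiU.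
    by case: (i \in I).
  apply: (leq_trans (leq_imset_card _ _)); by rewrite -hI cardsU leq_subr.
apply: (@leq_trans (\sum_(f | agr I t f) 2 ^ 'C(3 + #|Jf f|, 2))).
  by apply: leq_sum => f _; rewrite leq_exp2l // leq_bin2l.
rewrite (partition_big Jf (fun J => J \subset ~: I)) /=; last first.
  by move=> f _; apply/subsetP => i; rewrite !inE => /andP [-> _].
apply: (@leq_trans (\sum_(J : {set 'I_k} | J \subset ~: I)
          2 ^ 'C(3 + #|J|, 2) * (3 ^ #|J| * m ^ (N - #|J|)))).
  apply: leq_sum => J JI.
  rewrite (eq_bigr (fun _ => 2 ^ 'C(3 + #|J|, 2))); last by move=> f /andP [_ /eqP ->].
  rewrite sum_nat_cond_const mulnC leq_mul2l; apply/orP; right.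
  exact: (@L_card I J t g1 g2 g3 U hU JI).
by apply: eq_leq; exact: (sum_subsets (~: I) (fun j => 2 ^ 'C(3 + j, 2) * (3 ^ j * m ^ (N - j)))).
Qed.


Definition U4 (f1 f2 f3 f4 : FF) : {set {set V}} :=
  binom2 (graph f1) :|: binom2 (graph f2) :|: binom2 (graph f3) :|: binom2 (graph f4).

Definition cw (f : FF) (U : {set V}) := 'C(#|graph f :&: U|, 2).

Lemma chain f1 f2 f3 f4 :
  4 * 'C(k, 2) <= #|U4 f1 f2 f3 f4| + cw f2 (graph f1) + cw f3 (graph f1 :|: graph f2)
                  + cw f4 (graph f1 :|: graph f2 :|: graph f3).
Proof.
have cB f : #|binom2 (graph f)| = 'C(k, 2) by rewrite card_binom2 card_graph.
have s1 := @union_step (binom2 (graph f1)) (graph f2) (graph f1) (subxx _).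
have s2 := @union_step (binom2 (graph f1) :|: binom2 (graph f2)) (graph f3)
             (graph f1 :|: graph f2) (binom2U _ _).
have s3 := @union_step (binom2 (graph f1) :|: binom2 (graph f2) :|: binom2 (graph f3)) (graph f4)
             (graph f1 :|: graph f2 :|: graph f3)
             (subset_trans (setSU _ (binom2U _ _)) (binom2U _ _)).
rewrite !card_graph !cB in s1 s2 s3.
rewrite /U4 /cw; lia.
Qed.

Lemma card_sub_exists (T : finType) (A : {set T}) n :
  n <= #|A| -> exists2 B : {set T}, B \subset A & #|B| = n.
Proof.
move=> /card_geqP [s [us ss sA]]; exists [set x in s].
  by apply/subsetP => x; rewrite inE; apply: sA.
by rewrite cardsE (card_uniqP us).
Qed.

Lemma cluster_cover A : A \in cluster4 k m ->
  exists (I : {set 'I_k}) (f1 f2 f3 f4 : FF), [&& #|I| == 3, agr I f1 f2, agr I f1 f3 & agr I f1 f4]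
    /\ A = U4 f1 f2 f3 f4.
Proof.
case/imsetP => Q; rewrite inE => /and3P [QF /eqP Q4 Q2] ->.
have hE : forall E, E \in Q -> exists f : FF, E = binom2 (graph f).
  move=> E EQ; have := subsetP QF E EQ; case/imsetP => S; rewrite inE => tS ->.
  by have [f ->] := transversal_graph tS; exists f.
rewrite cardE in Q4.
have mQ : forall E, (E \in Q) = (E \in enum Q) by move=> E; rewrite mem_enum.
move: Q4 mQ; case: (enum Q) => [|E1 [|E2 [|E3 [|E4 [|E5 s]]]]] //= _ mQ.
have [f1 e1] := hE E1 ltac:(by rewrite mQ !inE eqxx).
have [f2 e2] := hE E2 ltac:(by rewrite mQ !inE eqxx ?orbT).
have [f3 e3] := hE E3 ltac:(by rewrite mQ !inE eqxx ?orbT).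
have [f4 e4] := hE E4 ltac:(by rewrite mQ !inE eqxx ?orbT).
have eU : \bigcup_(E in Q) E = U4 f1 f2 f3 f4.
  apply/setP => e; apply/bigcupP/idP => [[E EQ eE]|].
    rewrite mQ !inE in EQ; rewrite /U4 !in_setU.
    by case/or4P: EQ => /eqP EE; rewrite EE ?e1 ?e2 ?e3 ?e4 in eE; rewrite eE ?orbT.
  rewrite /U4 !in_setU => /orP [/orP [/orP [h|h]|h]|h].
  - by exists E1; rewrite ?mQ ?inE ?eqxx ?orbT ?e1.
  - by exists E2; rewrite ?mQ ?inE ?eqxx ?orbT ?e2.
  - by exists E3; rewrite ?mQ ?inE ?eqxx ?orbT ?e3.
  - by exists E4; rewrite ?mQ ?inE ?eqxx ?orbT ?e4.
have allE : forall e, e \in \bigcap_(E in Q) E ->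
    [/\ e \subset graph f1, e \subset graph f2, e \subset graph f3 & e \subset graph f4]
    /\ #|e| = 2.
  move=> e /bigcapP he.
  have g1 := he E1 ltac:(by rewrite mQ !inE eqxx ?orbT).
  have g2 := he E2 ltac:(by rewrite mQ !inE eqxx ?orbT).
  have g3 := he E3 ltac:(by rewrite mQ !inE eqxx ?orbT).
  have g4 := he E4 ltac:(by rewrite mQ !inE eqxx ?orbT).
  rewrite e1 inE in g1; rewrite e2 inE in g2; rewrite e3 inE in g3; rewrite e4 inE in g4.
  case/andP: g1 => -> /eqP ->; case/andP: g2 => -> _; case/andP: g3 => -> _.
  by case/andP: g4 => -> _.
move/card_gt1P: Q2 => [e [e' [he he' ne]]].
rewrite inE in he; case/andP: he => /allE [[a1 a2 a3 a4] c1] _.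
rewrite inE in he'; case/andP: he' => /allE [[b1 b2 b3 b4] c2] _.
pose I0 := [set i | [&& f2 i == f1 i, f3 i == f1 i & f4 i == f1 i]].
have hsub : e :|: e' \subset [set (i, f1 i) | i in I0].
  apply/subsetP => [[i v]] hx.
  have gx : forall f, e \subset graph f -> e' \subset graph f -> (i, v) \in graph f.
    move=> f h1 h2; case/setUP: hx => hx; [exact: subsetP h1 _ hx|exact: subsetP h2 _ hx].
  move: (gx _ a1 b1) (gx _ a2 b2) (gx _ a3 b3) (gx _ a4 b4).
  rewrite !in_graph => /eqP -> /eqP h2 /eqP h3 /eqP h4.
  by apply: imset_f; rewrite inE -h2 -h3 -h4 !eqxx.
have c3 : 3 <= #|e :|: e'|.
  rewrite ltnNge; apply/negP => hle.
  have ee : e = e :|: e'.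
    by apply/eqP; rewrite eqEcard subsetUl c1.
  have ee' : e' = e :|: e'.
    by apply/eqP; rewrite eqEcard subsetUr c2.
  by move/eqP: ne; rewrite ee -ee'.
have : 3 <= #|I0| by apply: leq_trans c3 (leq_trans (subset_leq_card hsub) (leq_imset_card _ _)).
case/card_sub_exists => I II0 cI.
exists I, f1, f2, f3, f4; split; last by rewrite eU.
rewrite cI eqxx /=; apply/and3P; split; apply/forallP => i; apply/implyP => iI;
  have := subsetP II0 i iI; rewrite inE => /and3P [h2 h3 h4] //.
Qed.

End Comb.


Section Nest.
Variables k m : nat.
Local Notation V := (vtx k m).
Local Notation FF := {ffun 'I_k -> 'I_m}.

Definition Gw (I : {set 'I_k}) (f1 f2 f3 f4 : FF) : nat :=
  ([&& #|I| == 3, agr I f1 f2, agr I f1 f3 & agr I f1 f4] : nat) *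
  2 ^ (cw f2 (graph f1) + cw f3 (graph f1 :|: graph f2)
       + cw f4 (graph f1 :|: graph f2 :|: graph f3)).

Lemma ind_sum (P : pred FF) (F : FF -> nat) :
  \sum_(f : FF) (P f : nat) * F f = \sum_(f | P f) F f.
Proof. by rewrite [RHS]big_mkcond; apply: eq_bigr => f _; case: (P f); rewrite ?mul1n. Qed.

Lemma nested_bound (B : nat) :
  (forall (I : {set 'I_k}) (t g1 g2 g3 : FF) (U : {set V}), #|I| = 3 ->
    (forall i v, (i, v) \in U -> v \in [set g1 i; g2 i; g3 i]) ->
    \sum_(f | agr I t f) 2 ^ cw f U <= B) ->
  \sum_(I : {set 'I_k}) \sum_(f1 : FF) \sum_(f2 : FF) \sum_(f3 : FF) \sum_(f4 : FF)
      Gw I f1 f2 f3 f4 <= 'C(k, 3) * (m ^ k * B ^ 3).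
Proof.
move=> hL.
have inner : forall (I : {set 'I_k}) (f1 : FF), #|I| = 3 ->
    \sum_(f2 : FF) \sum_(f3 : FF) \sum_(f4 : FF) Gw I f1 f2 f3 f4 <= B ^ 3.
  move=> I f1 hI.
  pose a2 f2 := (agr I f1 f2 : nat) * 2 ^ cw f2 (graph f1).
  pose a3 f2 f3 := (agr I f1 f3 : nat) * 2 ^ cw f3 (graph f1 :|: graph f2).
  pose a4 f2 f3 f4 := (agr I f1 f4 : nat) * 2 ^ cw f4 (graph f1 :|: graph f2 :|: graph f3).
  have eG : forall f2 f3 f4, Gw I f1 f2 f3 f4 = a2 f2 * (a3 f2 f3 * a4 f2 f3 f4).
    move=> f2 f3 f4; rewrite /Gw /a2 /a3 /a4 hI eqxx /= !expnD.
    by case: (agr I f1 f2); case: (agr I f1 f3); case: (agr I f1 f4);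
      rewrite /= ?mul1n ?mul0n ?muln0 ?mulnA.
  have s4 : forall f2 f3, \sum_(f4 : FF) a4 f2 f3 f4 <= B.
    move=> f2 f3; rewrite /a4 ind_sum; apply: (hL _ _ f1 f2 f3) => // i v.
    by rewrite !inE /= => /orP [/orP [] |] ->; rewrite ?orbT.
  have s3 : forall f2, \sum_(f3 : FF) a3 f2 f3 <= B.
    move=> f2; rewrite /a3 ind_sum; apply: (hL _ _ f1 f2 f2) => // i v.
    by rewrite !inE /= => /orP [] ->; rewrite ?orbT.
  have s2 : \sum_(f2 : FF) a2 f2 <= B.
    rewrite /a2 ind_sum; apply: (hL _ _ f1 f1 f1) => // i v.
    by rewrite !inE /= => ->.
  have -> : \sum_(f2 : FF) \sum_(f3 : FF) \sum_(f4 : FF) Gw I f1 f2 f3 f4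
      = \sum_(f2 : FF) (a2 f2 * \sum_(f3 : FF) (a3 f2 f3 * \sum_(f4 : FF) a4 f2 f3 f4)).
    apply: eq_bigr => f2 _; rewrite big_distrr /=; apply: eq_bigr => f3 _.
    by rewrite !big_distrr /=; apply: eq_bigr => f4 _; rewrite eG.
  apply: (@leq_trans (\sum_(f2 : FF) (a2 f2 * (B * B)))).
    apply: leq_sum => f2 _; rewrite leq_mul2l; apply/orP; right.
    apply: (@leq_trans (\sum_(f3 : FF) (a3 f2 f3 * B))).
      by apply: leq_sum => f3 _; rewrite leq_mul2l s4 orbT.
    by rewrite -big_distrl /= leq_mul2r s3 orbT.
  have -> : B ^ 3 = B * (B * B) by rewrite !expnS expn0 muln1.
  by rewrite -big_distrl /= leq_mul2r s2 orbT.
rewrite (bigID (fun I : {set 'I_k} => #|I| == 3)) /=.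
rewrite [X in _ + X]big1 ?addn0; last first.
  move=> I /negbTE hI; apply: big1 => f1 _; apply: big1 => f2 _; apply: big1 => f3 _.
  by apply: big1 => f4 _; rewrite /Gw hI.
apply: (@leq_trans (\sum_(I : {set 'I_k} | #|I| == 3) (m ^ k * B ^ 3))).
  apply: leq_sum => I /eqP hI.
  apply: (@leq_trans (\sum_(f1 : FF) B ^ 3)).
    by apply: leq_sum => f1 _; apply: inner.
  by rewrite sum_nat_const card_ffun !card_ord.
by rewrite sum_nat_cond_const card_draws card_ord.
Qed.

End Nest.

Section Rat.
Local Open Scope ring_scope.

Lemma cover_le (T1 T2 : finType) (D : {set T1}) (psi : T2 -> T1) (P : pred T2)
  (w : T1 -> rat) (w' : T2 -> rat) :
  (forall A, A \in D -> exists2 x, P x & psi x = A) ->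
  (forall x, P x -> w (psi x) <= w' x) -> (forall x, 0 <= w' x) ->
  \sum_(A in D) w A <= \sum_x w' x.
Proof.
move=> cov le n'.
apply: (@le_trans _ _ (\sum_(A in D) \sum_(x | (P x && (psi x \in D)) && (psi x == A)) w' x)).
  apply: ler_sum => A AD; have [x Px xA] := cov A AD.
  rewrite (bigD1 x) /=; last by rewrite Px xA AD eqxx.
  rewrite -[w _]addr0; apply: lerD; first by rewrite -xA; exact: le.
  by apply: sumr_ge0 => y _.
rewrite -(partition_big psi (mem D)) //=; last by move=> x /andP [].
rewrite [X in _ <= X](bigID (fun x => P x && (psi x \in D))) /= lerDl.
by apply: sumr_ge0.
Qed.

Lemma two_Q : (2%:Q = 2%:R :> rat). Proof. by []. Qed.

Lemma weight_le (a b c : nat) : (b <= a + c)%N ->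
  (2%:Q) ^- a <= (2 ^ c)%:R / (2 ^ b)%:R.
Proof.
move=> h; rewrite two_Q.
have p2 : forall n, (0 : rat) < (2 ^ n)%:R by move=> n; rewrite ltr0n expn_gt0.
rewrite ler_pdivlMr // !natrX.
have hb : (2%:R ^+ b <= 2%:R ^+ a * 2%:R ^+ c :> rat).
  by rewrite -!natrX -natrM ler_nat -expnD leq_exp2l.
apply: le_trans (ler_wpM2l _ hb) _; first by rewrite invr_ge0 exprn_ge0 // ler0n.
by rewrite mulrA mulVf ?mul1r // expf_neq0 // pnatr_eq0.
Qed.

End Rat.

Lemma nat_final (k m B S : nat) : (3 < k)%N -> (0 < m)%N -> B = 16 * m ^ (k - 3) ->
  (S <= 'C(k, 3) * (m ^ k * B ^ 3))%N ->
  (S < k ^ 3 * ('C(k, 3) * m ^ (4 * k - 9) * 2 ^ 9))%N.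
Proof.
move=> hk hm -> hS; apply: (leq_ltn_trans hS).
have e : m ^ k * (16 * m ^ (k - 3)) ^ 3 = 8 * (m ^ (4 * k - 9) * 2 ^ 9).
  rewrite expnMn -expnM mulnCA -expnD.
  have -> : k + (k - 3) * 3 = 4 * k - 9 by lia.
  have -> : 16 ^ 3 = 8 * 2 ^ 9 by [].
  by rewrite -mulnA (mulnC (2 ^ 9)).
rewrite e.
have hC : (0 < 'C(k, 3))%N by rewrite bin_gt0; lia.
have hM : (0 < m ^ (4 * k - 9) * 2 ^ 9)%N by rewrite muln_gt0 !expn_gt0 hm.
have hk3 : (8 < k ^ 3)%N.
  apply: (@leq_trans (4 ^ 3)) => //; apply: expmono; lia.
rewrite mulnCA -(mulnA ('C(k, 3))) ltn_pmul2r //.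
by rewrite muln_gt0 hC.
Qed.

End Aux.
Import Aux.

Theorem mainTheorem4 :
  exists K : nat, forall k : nat, K <= k -> odd k ->
    let m := 2 ^ ((k + 9)./2) in
    let n := k * m in
    (Tweight (cluster4 k m) < (k%:R) ^+ 3 * fnk n k)%R.
Proof.
exists 43 => k hk ko; lazy zeta.
set m := 2 ^ (k + 9)./2; set n := k * m.
have [p [kE hp]] : exists p, k = p.*2 + 3 /\ 20 <= p.
  exists (k./2).-1; have e := odd_double_half k; rewrite ko in e.
  move: e; rewrite -mul2n; move: (k./2) => h e; split; lia.
have mE : m = 2 ^ (p + 6).
  rewrite /m kE; congr (2 ^ _).
  have -> : p.*2 + 3 + 9 = (p + 6).*2 by rewrite -!mul2n; lia.
  by rewrite doubleK.
pose B := 16 * m ^ (k - 3).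
have hL : forall (I : {set 'I_k}) (t g1 g2 g3 : {ffun 'I_k -> 'I_m}) (U : {set vtx k m}),
    #|I| = 3 -> (forall i v, (i, v) \in U -> v \in [set g1 i; g2 i; g3 i]) ->
    \sum_(f | agr I t f) 2 ^ cw f U <= B.
  move=> I t g1 g2 g3 U hI hU.
  apply: leq_trans (@L_sum k m I t g1 g2 g3 U hI hU) _.
  have cI : #|~: I| = p.*2 by have := cardsC I; rewrite card_ord hI; move: kE; lia.
  rewrite cI /B kE addnK mE; exact: sum_bound.
have hN := nested_bound hL.
have hS := nat_final (k := k) (m := m) (B := B) ltac:(lia) ltac:(by rewrite /m expn_gt0) erefl hN.
pose D2 := (2 ^ (4 * 'C(k, 2)))%N.
have hD : (0 < D2%:R :> rat)%R by rewrite ltr0n expn_gt0.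
pose FF := {ffun 'I_k -> 'I_m}.
have hcov := @cover_le _ ({set 'I_k} * FF * FF * FF * FF)%type (cluster4 k m) (fun x => U4 x.1.1.1.2 x.1.1.2 x.1.2 x.2)
  (fun x => [&& #|x.1.1.1.1| == 3, agr x.1.1.1.1 x.1.1.1.2 x.1.1.2,
               agr x.1.1.1.1 x.1.1.1.2 x.1.2 & agr x.1.1.1.1 x.1.1.1.2 x.2])
  (fun A => (2%:Q) ^- #|A|)%R
  (fun x => (Gw x.1.1.1.1 x.1.1.1.2 x.1.1.2 x.1.2 x.2)%:R / D2%:R)%R.
have hT := hcov ltac:(move=> A /cluster_cover [I [f1 [f2 [f3 [f4 [h ->]]]]]];
                      by exists ((((I, f1), f2), f3), f4))
                ltac:(move=> [[[[I f1] f2] f3] f4] /= h; rewrite /Gw h mul1n;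
                      apply: weight_le; rewrite !addnA; exact: chain)
                ltac:(by move=> x; rewrite divr_ge0 // ler0n).
rewrite -mulr_suml -natr_sum in hT.
rewrite !pair_bigA in hS.
rewrite /Tweight; apply: (le_lt_trans hT).
have eF : (k%:R ^+ 3 * fnk n k
    = (k ^ 3 * ('C(k, 3) * m ^ (4 * k - 9) * 2 ^ 9))%:R / D2%:R :> rat)%R.
  rewrite /fnk /n two_Q.
  have -> : ((k * m)%:R / k%:R = m%:R :> rat)%R.
    by rewrite natrM (mulrC (k%:R)%R) mulfK // pnatr_eq0; lia.
  have -> : ((4 * k)%:Z - 9 = (4 * k - 9)%N :> int)%R by rewrite subzn //; lia.
  rewrite -exprnP expfzDr ?pnatr_eq0 //.
  rewrite -exprnN -exprnP /D2.
  have -> : ((k ^ 3 * ('C(k, 3) * m ^ (4 * k - 9) * 2 ^ 9))%:R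
     = k%:R ^+ 3 * ('C(k, 3)%:R * m%:R ^+ (4 * k - 9) * 2%:R ^+ 9) :> rat)%R.
    by rewrite !natrM !natrX.
  rewrite natrX -!mulrA.
  rewrite (mulrC (2%:R ^- (4 * 'C(k, 2)))%R).
  have e9 : forall y : rat, (2%:R ^+ 9 * y = 2%:R * (2%:R * (2%:R * (2%:R * (2%:R * (2%:R * (2%:R * (2%:R * (2%:R * y)))))))))%R.
    by move=> y; rewrite !exprS expr0 mulr1 -!mulrA.
  by rewrite e9.
rewrite eF ltr_pM2r ?invr_gt0 // ltr_nat.
exact: hS.
Qed.
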